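(* Let $f:\mathbb{Z}_+^E\to\mathbb{R}_{\ge0}$ be non-negative and DR-submodular, $k$ a positive integer and $\alpha\in(0,1)$. Let $\mathbf{x},\mathbf{y}$ be the two vectors held by Algorithm FastDrSub$(f,E,k,\alpha)$ at the end of its main loop (step 3, before trimming). Let $\mathbf{o}$ be an optimal solution of the DrSMC problem and let $\mathbf{o}_1\in\mathbb{Z}_+^E$ be defined by $\mathbf{o}_1(e)=\mathbf{o}(e)$ if $\mathbf{o}(e)\le\alpha k$ and $\mathbf{o}_1(e)=0$ otherwise. Then $$f(\mathbf{o}_1\vee\mathbf{x})+f(\mathbf{o}_1\vee\mathbf{y})\le 4\big(f(\mathbf{x})+f(\mathbf{y})\big).$$
   Context: Notation: $E$ is a finite ground set of size $n$; $\mathbf{1}_e$ is the $e$-th unit vector; $\mathbf{x}\le\mathbf{y}$ is coordinatewise; $\vee,\wedge$ are coordinatewise max/min; $\|\mathbf{x}\|_1=\sum_{e}\mathbf{x}(e)$; $f(\mathbf{a}\mid\mathbf{b}):=f(\mathbf{a}+\mathbf{b})-f(\mathbf{b})$. $f$ is DR-submodular if $f(\mathbf{x}+\mathbf{1}_e)-f(\mathbf{x})\ge f(\mathbf{y}+\mathbf{1}_e)-f(\mathbf{y})$ for all $\mathbf{x}\le\mathbf{y}$ and $e\in E$. DrSMC problem: maximize $f(\mathbf{x})$ over $\mathbf{x}\in\mathbb{Z}_+^E$ subject to $\|\mathbf{x}\|_1\le k$ and $\mathbf{0}\le\mathbf{x}\le k\cdot\mathbf{1}$; $\mathsf{opt}$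 denotes its optimal value. Algorithm FastDrSub$(f,E,k,\alpha)$ (elements of $E$ are processed in a fixed order): 1. Compute $(d_{\max},e_{\max})\in\arg\max\{f(d\mathbf{1}_e): e\in E,\ d\in\mathbb{Z},\ \alpha k<d\le k\}$. 2. Set $\mathbf{x}\leftarrow\mathbf{0}$, $\mathbf{y}\leftarrow\mathbf{0}$. 3. For each $e\in E$ in order: let $d_{(\mathbf{x},e)}=\max\{d\in\mathbb{Z}: 0<d\le\alpha k,\ f(\mathbf{1}_e\mid\mathbf{x}+(d-1)\mathbf{1}_e)\ge f(\mathbf{x})/k\}$ and $d_{(\mathbf{y},e)}=\max\{d\in\mathbb{Z}: 0<d\le\alpha k,\ f(\mathbf{1}_e\mid\mathbf{y}+(d-1)\mathbf{1}_e)\ge f(\mathbf{y})/k\}$ (each computed by binary search on $d$, and taken to be $0$ if the set is empty). If $f(d_{(\mathbf{x},e)}\mathbf{1}_e\mid\mathbf{x})\ge f(d_{(\mathbf{y},e)}\mathbf{1}_e\mid\mathbf{y})$, set $\mathbf{x}\leftarrow\mathbf{x}+d_{(\mathbf{x},e)}\mathbf{1}_e$; otherwise set $\mathbf{y}\leftarrow\mathbf{y}+d_{(\mathbf{y},e)}\mathbf{1}_e$. 4. (Trimming) Let $e_1,e_2,\dots$ be the elements of $\{e:\mathbf{x}(e)>0\}$ listed in reverse order of their addition to $\mathbf{x}$ (most recent first) and $\mathbf{x}_t=\sum_{i=1}^t\mathbf{x}(e_i)\mathbf{1}_{e_i}$; let $\mathbf{x}'=\mathbf{x}_t$ for the largest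 $t$ with $\|\mathbf{x}_t\|_1\le k$. Define $\mathbf{y}'$ from $\mathbf{y}$ in the same way. 5. Return $\mathbf{z}\in\arg\max\{f(\mathbf{t}):\mathbf{t}\in\{\mathbf{x}',\mathbf{y}',d_{\max}\mathbf{1}_{e_{\max}}\}\}$. *)

(* Defs.v *)
From mathcomp Require Import all_boot all_order all_algebra.
Set Implicit Arguments. Unset Strict Implicit. Unset Printing Implicit Defensive.
Import Order.TTheory GRing.Theory Num.Theory.
Local Open Scope ring_scope.

Section Defs.
Variable E : finType.

Definition vec := {ffun E -> nat}.
Definition zerov : vec := [ffun _ => 0%N].
Definition unitv (e : E) : vec := [ffun a => nat_of_bool (a == e)].
Definition addv (x y : vec) : vec := [ffun a => (x a + y a)%N].
Definition scalev (d : nat) (x : vec) : vec := [ffun a => (d * x a)%N].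
Definition joinv (x y : vec) : vec := [ffun a => maxn (x a) (y a)].
Definition lev (x y : vec) : Prop := forall a, (x a <= y a)%N.
Definition norm1 (x : vec) : nat := (\sum_(a : E) x a)%N.

Variable R : realFieldType.

Definition marg (f : vec -> R) (a b : vec) : R := f (addv a b) - f b.

Definition DR_submodular (f : vec -> R) : Prop :=
  forall (x y : vec) (e : E), lev x y ->
    f (addv y (unitv e)) - f y <= f (addv x (unitv e)) - f x.

Definition feasible (k : nat) (x : vec) : Prop :=
  (norm1 x <= k)%N /\ forall a, (x a <= k)%N.
Definition optimal (f : vec -> R) (k : nat) (o : vec) : Prop :=
  feasible k o /\ forall z, feasible k z -> f z <= f o.

(* d_{(x,e)} : the largest integer d with 0 < d <= alpha k and
   f(1_e | x + (d-1) 1_e) >= f(x)/k; 0 if no such d (alpha < 1 so d < k+1). *)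
Definition dsel (f : vec -> R) (k : nat) (alpha : R) (x : vec) (e : E) : nat :=
  (\max_(d < k.+1 | (0 < (d : nat))%N && ((d : nat)%:R <= alpha * k%:R)%R
       && (f x / k%:R <= marg f (unitv e) (addv x (scalev (d : nat).-1 (unitv e))))%R)
     (d : nat))%N.

Definition step (f : vec -> R) (k : nat) (alpha : R) (xy : vec * vec) (e : E)
  : vec * vec :=
  let x := xy.1 in let y := xy.2 in
  let dx := dsel f k alpha x e in
  let dy := dsel f k alpha y e in
  if marg f (scalev dy (unitv e)) y <= marg f (scalev dx (unitv e)) x
  then (addv x (scalev dx (unitv e)), y)
  else (x, addv y (scalev dy (unitv e))).

Definition main_loop (f : vec -> R) (k : nat) (alpha : R) (s : seq E) : vec * vec :=
  foldl (step f k alpha) (zerov, zerov) s.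

Definition small_part (k : nat) (alpha : R) (o : vec) : vec :=
  [ffun a => if (o a)%:R <= alpha * k%:R then o a else 0%N].

End Defs.

(* Main.v *)
From Pilot Require Import Defs.
From mathcomp Require Import all_boot all_order all_algebra.
From mathcomp Require Import zify ring lra.
Import Pilot.Defs.
Set Implicit Arguments. Unset Strict Implicit. Unset Printing Implicit Defensive.
Import Order.TTheory GRing.Theory Num.Theory.
Local Open Scope ring_scope.

Definition G (E : finType) (R : realFieldType) (f : vec E -> R) (x : vec E)
  (a : E) (n : nat) : R := f (addv x (scalev n (unitv a))).

Lemma addv_s0 (E : finType) (x : vec E) a : addv x (scalev 0 (unitv a)) = x.
Proof. by apply/ffunP => b; rewrite !ffunE mul0n addn0. Qed.

Lemma addv_ss (E : finType) (x : vec E) a n m :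
  addv (addv x (scalev n (unitv a))) (scalev m (unitv a))
  = addv x (scalev (n + m) (unitv a)).
Proof. by apply/ffunP => b; rewrite !ffunE mulnDl addnA. Qed.

Lemma addv_unit (E : finType) (x : vec E) a n :
  addv (addv x (scalev n (unitv a))) (unitv a) = addv x (scalev n.+1 (unitv a)).
Proof. by apply/ffunP => b; rewrite !ffunE mulSn; lia. Qed.

Lemma addv_unitl (E : finType) (x : vec E) a n :
  addv (unitv a) (addv x (scalev n (unitv a))) = addv x (scalev n.+1 (unitv a)).
Proof. by apply/ffunP => b; rewrite !ffunE mulSn addnCA. Qed.

Lemma G0 (E : finType) (R : realFieldType) (f : vec E -> R) x a : G f x a 0 = f x.
Proof. by rewrite /G addv_s0. Qed.

Lemma marg_unit (E : finType) (R : realFieldType) (f : vec E -> R) z e t :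
  marg f (unitv e) (addv z (scalev t (unitv e))) = G f z e t.+1 - G f z e t.
Proof. by rewrite /marg /G addv_unitl. Qed.

Lemma marg_G (E : finType) (R : realFieldType) (f : vec E -> R) z e d :
  marg f (scalev d (unitv e)) z = G f z e d - f z.
Proof.
rewrite /marg /G; congr (f _ - _); by apply/ffunP => b; rewrite !ffunE addnC.
Qed.

Lemma Ginc_le (E : finType) (R : realFieldType) (f : vec E -> R)
  (hDR : DR_submodular f) (u v : vec E) a n : lev u v ->
  G f v a n.+1 - G f v a n <= G f u a n.+1 - G f u a n.
Proof.
move=> huv; rewrite /G -!addv_unit; apply: hDR => b; rewrite !ffunE.
by apply: leq_add.
Qed.

Lemma Ginc_conc (E : finType) (R : realFieldType) (f : vec E -> R)
  (hDR : DR_submodular f) (u : vec E) a t t' : (t <= t')%N ->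
  G f u a t'.+1 - G f u a t' <= G f u a t.+1 - G f u a t.
Proof.
move=> htt; rewrite /G -!addv_unit; apply: hDR => b; rewrite !ffunE.
by apply: leq_add => //; apply: leq_mul.
Qed.

Lemma DRsum (E : finType) (R : realFieldType) (f : vec E -> R)
  (hDR : DR_submodular f) (u v : vec E) a n : lev u v ->
  G f v a n - G f v a 0 <= G f u a n - G f u a 0.
Proof.
move=> huv; elim: n => [|n IH]; first by rewrite !subrr.
have := Ginc_le hDR a n huv; lra.
Qed.

Lemma tele_up (R : realFieldType) (g : nat -> R) c lo hi : (lo <= hi)%N ->
  (forall i, (lo <= i)%N -> (i < hi)%N -> g i.+1 - g i <= c) ->
  g hi - g lo <= (hi - lo)%:R * c.
Proof.
elim: hi => [|hi IH].
  by rewrite leqn0 => /eqP ->; rewrite subrr subnn mul0r.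
rewrite leq_eqVlt => /orP [/eqP ->|hl] H; first by rewrite subrr subnn mul0r.
have hl' : (lo <= hi)%N by [].
have := IH hl' (fun i h1 h2 => H i h1 (ltnW h2)).
have := H hi hl' (ltnSn hi).
rewrite subSn // mulrSr; lra.
Qed.

Lemma tele_low (R : realFieldType) (g : nat -> R) lo hi : (lo <= hi)%N ->
  (forall i, (lo <= i)%N -> (i < hi)%N -> 0 <= g i.+1 - g i) ->
  g lo <= g hi.
Proof.
elim: hi => [|hi IH].
  by rewrite leqn0 => /eqP ->.
rewrite leq_eqVlt => /orP [/eqP ->|hl] H //.
have hl' : (lo <= hi)%N by [].
have := IH hl' (fun i h1 h2 => H i h1 (ltnW h2)).
have := H hi hl' (ltnSn hi); lra.
Qed.

Definition cond (E : finType) (R : realFieldType) (f : vec E -> R) (k : nat)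
  (alpha : R) (z : vec E) (e : E) (d : nat) : bool :=
  (0 < d)%N && (d%:R <= alpha * k%:R)
  && (f z / k%:R <= marg f (unitv e) (addv z (scalev d.-1 (unitv e)))).

Lemma dsel_cond (E : finType) (R : realFieldType) (f : vec E -> R) k alpha z e :
  dsel f k alpha z e = 0%N \/ cond f k alpha z e (dsel f k alpha z e).
Proof.
rewrite /dsel; apply: (big_ind (fun n => n = 0%N \/ cond f k alpha z e n)).
- by left.
- by move=> a b Ha Hb; rewrite /maxn; case: ifP.
- by move=> i Hi; right.
Qed.

Lemma dsel_above (E : finType) (R : realFieldType) (f : vec E -> R) k alpha z e t :
  (0 < k)%N -> alpha < 1 -> (dsel f k alpha z e < t)%N ->
  t%:R <= alpha * k%:R ->
  marg f (unitv e) (addv z (scalev t.-1 (unitv e))) < f z / k%:R.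
Proof.
move=> hk ha1 hdt hta; rewrite ltNge; apply/negP => Hc.
have tk : (t < k.+1)%N.
  rewrite ltnS -(ler_nat R); apply: (le_trans hta).
  rewrite -[X in _ <= X]mul1r ler_wpM2r // ?ler0n //; exact: ltW.
have := @leq_bigmax_cond _ (fun d : 'I_k.+1 => (0 < (d : nat))%N && ((d : nat)%:R <= alpha * k%:R)%R
       && (f z / k%:R <= marg f (unitv e) (addv z (scalev (d : nat).-1 (unitv e))))%R)
   (fun d : 'I_k.+1 => (d : nat)) (Ordinal tk).
rewrite /= hta Hc andbT -/(dsel f k alpha z e).
have -> : (0 < t)%N by apply: leq_ltn_trans hdt.
by move=> /(_ isT); rewrite leqNgt hdt.
Qed.

Lemma dsel_mono (E : finType) (R : realFieldType) (f : vec E -> R)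
  (hDR : DR_submodular f) k alpha z e t :
  (0 < k)%N -> 0 <= f z -> (t <= dsel f k alpha z e)%N ->
  G f z e t <= G f z e (dsel f k alpha z e).
Proof.
move=> hk hf htd; case: (dsel_cond f k alpha z e) => [h|].
  by move: htd; rewrite h leqn0 => /eqP ->.
set d := dsel f k alpha z e => /andP [/andP [hd0 _] hc].
apply: (tele_low (g := G f z e)) => // i _ hi.
rewrite marg_unit (prednK hd0) in hc.
have hid : (i <= d.-1)%N by rewrite -ltnS (prednK hd0).
have := Ginc_conc hDR z e hid; rewrite (prednK hd0) => h.
have : 0 <= f z / k%:R by apply: divr_ge0 => //; apply: ler0n.
lra.
Qed.

Lemma dsel_Q (E : finType) (R : realFieldType) (f : vec E -> R)
  k alpha z e m :
  (0 < k)%N -> alpha < 1 -> 0 <= f z -> m%:R <= alpha * k%:R ->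
  G f z e (maxn (dsel f k alpha z e) m) - G f z e (dsel f k alpha z e)
    <= m%:R * (f z / k%:R).
Proof.
move=> hk ha1 hf hm; set d := dsel f k alpha z e.
have hc : 0 <= f z / k%:R by apply: divr_ge0 => //; apply: ler0n.
apply: (le_trans (tele_up (g := G f z e) (c := f z / k%:R) (leq_maxl d m) _)).
  move=> i hdi hi; rewrite -marg_unit; apply: ltW.
  have him : (i < m)%N by move: hi; rewrite /maxn; case: ifP => //; lia.
  apply: (@dsel_above E R f k alpha z e i.+1 hk ha1); first by rewrite ltnS.
  apply: le_trans hm; by rewrite ler_nat.
apply: ler_wpM2r => //; rewrite ler_nat; lia.
Qed.

Definition T (E : finType) (R : realFieldType) (f : vec E -> R) (m : nat)
  (x : vec E) (a : E) : R := G f x a (m - x a) - G f x a 0.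

Lemma G_shift (E : finType) (R : realFieldType) (f : vec E -> R) u e d n :
  G f (addv u (scalev d (unitv e))) e n = G f u e (d + n).
Proof. by rewrite /G addv_ss. Qed.

Lemma stepbound (E : finType) (R : realFieldType) (f : vec E -> R)
  (hDR : DR_submodular f) k alpha (u v : vec E) e m :
  (0 < k)%N -> alpha < 1 -> 0 <= f u -> 0 <= f v ->
  u e = 0%N -> v e = 0%N -> m%:R <= alpha * k%:R ->
  G f v e (dsel f k alpha v e) - f v <= G f u e (dsel f k alpha u e) - f u ->
  T f m (addv u (scalev (dsel f k alpha u e) (unitv e))) e + T f m v e
  <= (G f u e (dsel f k alpha u e) - f u) + m%:R * (f u / k%:R)
     + m%:R * (f v / k%:R).
Proof.
move=> hk ha1 hfu hfv hue hve hm hc.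
set du := dsel f k alpha u e; set dv := dsel f k alpha v e.
have h1 : T f m (addv u (scalev du (unitv e))) e
          = G f u e (maxn du m) - G f u e du.
  rewrite /T !G_shift !ffunE hue eqxx add0n muln1 addn0 maxnE //.
have h2 : T f m v e = G f v e m - f v by rewrite /T hve subn0 G0.
have Qu := @dsel_Q E R f k alpha u e m hk ha1 hfu hm.
have Qv := @dsel_Q E R f k alpha v e m hk ha1 hfv hm.
have Mv : G f v e m <= G f v e (maxn dv m).
  case: (leqP m dv) => hmd //.
  exact: dsel_mono.
rewrite h1 h2; move: Qu Qv Mv hc; rewrite -/du -/dv; lra.
Qed.

Definition Phi (E : finType) (R : realFieldType) (f : vec E -> R) (w : E -> nat)
  (S : seq E) (x y : vec E) : R :=
  \sum_(a <- S) (T f (w a) x a + T f (w a) y a).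

Lemma lev_add (E : finType) (x : vec E) d e : lev x (addv x (scalev d (unitv e))).
Proof. by move=> b; rewrite !ffunE leq_addr. Qed.

Lemma lev_refl (E : finType) (x : vec E) : lev x x.
Proof. by move=> b. Qed.

Lemma T_mono (E : finType) (R : realFieldType) (f : vec E -> R)
  (hDR : DR_submodular f) m (x x' : vec E) a :
  lev x x' -> x' a = x a -> T f m x' a <= T f m x a.
Proof. by move=> hl he; rewrite /T he; apply: DRsum. Qed.

Lemma Phi_mono (E : finType) (R : realFieldType) (f : vec E -> R)
  (hDR : DR_submodular f) w S (x x' y y' : vec E) :
  lev x x' -> lev y y' -> (forall a, a \in S -> x' a = x a /\ y' a = y a) ->
  Phi f w S x' y' <= Phi f w S x y.
Proof.
move=> hx hy he; rewrite /Phi big_seq_cond [X in _ <= X]big_seq_cond.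
apply: ler_sum => a /andP [ha _]; have [h1 h2] := he a ha.
by apply: lerD; apply: T_mono.
Qed.

Lemma main_inv (E : finType) (R : realFieldType) (f : vec E -> R)
  (hf : forall v, 0 <= f v) (hDR : DR_submodular f) k alpha (w : E -> nat) :
  (0 < k)%N -> alpha < 1 -> (forall a, (w a)%:R <= alpha * k%:R) ->
  forall s, uniq s ->
  (forall a, a \notin s -> (main_loop f k alpha s).1 a = 0%N
                           /\ (main_loop f k alpha s).2 a = 0%N) /\
  Phi f w s (main_loop f k alpha s).1 (main_loop f k alpha s).2
  <= f (main_loop f k alpha s).1 + f (main_loop f k alpha s).2
     + (\sum_(a <- s) w a)%:R * ((f (main_loop f k alpha s).1
                                  + f (main_loop f k alpha s).2) / k%:R).
Proof.
move=> hk ha1 hw; elim/last_ind => [|s e IH].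
  move=> _; rewrite /main_loop /=; split; first by move=> a _; rewrite !ffunE.
  rewrite /Phi !big_nil mul0r addr0; apply: addr_ge0; exact: hf.
rewrite rcons_uniq => /andP [hes hs]; have [Hz HP] := IH hs.
move: Hz HP; rewrite /main_loop foldl_rcons -/(main_loop f k alpha s).
case: (main_loop f k alpha s) => x y /= Hz HP.
have [hxe hye] := Hz e hes.
have hk0 : 0 <= k%:R^-1 :> R by rewrite invr_ge0 ler0n.
rewrite /step /= !marg_G.
set dx := dsel f k alpha x e; set dy := dsel f k alpha y e.
rewrite /Phi -cats1 big_cat big_seq1 /= -/(Phi f w s _ _).
rewrite big_cat big_seq1 /= natrD.
have hne : forall a, a \in s -> (a == e) = false.
  by move=> a ha; apply/negbTE; apply: contraNneq hes => <-.
set S := (\sum_(a <- s) w a)%N.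
have hS : 0 <= S%:R :> R by rewrite ler0n.
have hwe : 0 <= (w e)%:R :> R by rewrite ler0n.
case: ifP => hc.
- set x' := addv x (scalev dx (unitv e)).
  split.
    move=> a; rewrite mem_cat mem_seq1 negb_or => /andP [has hae].
    rewrite !ffunE; have [-> ->] := Hz a has; by rewrite (negbTE hae) muln0.
  have Hm : Phi f w s x' y <= Phi f w s x y.
    apply: (Phi_mono hDR w (lev_add x dx e) (lev_refl y)).
    by move=> a ha; rewrite !ffunE hne // muln0 addn0.
  rewrite /=.
  have Hst := @stepbound E R f hDR k alpha x y e (w e) hk ha1 (hf x) (hf y) hxe hye (hw e) hc.
  rewrite -/dx -/x' in Hst.
  have hfx' : f x' = G f x e dx by [].
  have hg : f x <= f x'.
    by rewrite hfx' -{1}(G0 f x e); apply: dsel_mono => //; apply: hf.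
  have hA : (f x + f y) / k%:R <= (f x' + f y) / k%:R.
    by apply: ler_wpM2r => //; apply: lerD.
  have hAS := ler_wpM2l hS hA.
  have hAw := ler_wpM2l hwe hA.
  have heq : (w e)%:R * (f x / k%:R) + (w e)%:R * (f y / k%:R)
             = (w e)%:R * ((f x + f y) / k%:R) by rewrite -mulrDr mulrDl.
  rewrite mulrDl; move: Hm HP Hst hg hAS hAw heq; rewrite -/S hfx'; lra.
- set y' := addv y (scalev dy (unitv e)).
  split.
    move=> a; rewrite mem_cat mem_seq1 negb_or => /andP [has hae].
    rewrite !ffunE; have [-> ->] := Hz a has; by rewrite (negbTE hae) muln0.
  have Hm : Phi f w s x y' <= Phi f w s x y.
    apply: (Phi_mono hDR w (lev_refl x) (lev_add y dy e)).
    by move=> a ha; rewrite !ffunE hne // muln0 addn0.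
  rewrite /=.
  have hc' : G f x e dx - f x <= G f y e dy - f y.
    by apply: ltW; rewrite ltNge hc.
  have Hst := @stepbound E R f hDR k alpha y x e (w e) hk ha1 (hf y) (hf x) hye hxe (hw e) hc'.
  rewrite -/dy -/y' in Hst.
  have hfy' : f y' = G f y e dy by [].
  have hg : f y <= f y'.
    by rewrite hfy' -{1}(G0 f y e); apply: dsel_mono => //; apply: hf.
  have hA : (f x + f y) / k%:R <= (f x + f y') / k%:R.
    by apply: ler_wpM2r => //; apply: lerD.
  have hAS := ler_wpM2l hS hA.
  have hAw := ler_wpM2l hwe hA.
  have heq : (w e)%:R * (f y / k%:R) + (w e)%:R * (f x / k%:R)
             = (w e)%:R * ((f x + f y) / k%:R) by rewrite -mulrDr mulrDl addrC.
  rewrite mulrDl; move: Hm HP Hst hg hAS hAw heq; rewrite -/S hfy'; lra.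
Qed.

Lemma lattice (E : finType) (R : realFieldType) (f : vec E -> R)
  (hDR : DR_submodular f) (w : E -> nat) (x : vec E) :
  forall p, uniq p ->
  f [ffun b => if b \in p then maxn (w b) (x b) else x b] - f x
  <= \sum_(a <- p) T f (w a) x a.
Proof.
elim => [|a p IH].
  move=> _; rewrite big_nil.
  have -> : [ffun b => if b \in [::] then maxn (w b) (x b) else x b] = x.
    by apply/ffunP => b; rewrite ffunE.
  by rewrite subrr.
rewrite cons_uniq => /andP [hap hp]; rewrite big_cons.
set J := [ffun b => if b \in p then maxn (w b) (x b) else x b].
have hJ : [ffun b => if b \in a :: p then maxn (w b) (x b) else x b]
          = addv J (scalev (w a - x a) (unitv a)).
  apply/ffunP => b; rewrite /J !ffunE in_cons.
  case: eqP => [->|hb] /=; first by rewrite (negbTE hap) muln1 maxnC maxnE.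
  by rewrite muln0 addn0.
have hl : lev x J by move=> b; rewrite /J ffunE; case: ifP => _ //; apply: leq_maxr.
have hJa : J a = x a by rewrite /J ffunE (negbTE hap).
have := @DRsum E R f hDR x J a (w a - x a) hl.
rewrite G0 hJ -/(G f J a (w a - x a)) /T.
have := IH hp; rewrite -/J; lra.
Qed.

Theorem lemma3 (E : finType) (R : realFieldType) (f : vec E -> R)
  (k : nat) (alpha : R) (s : seq E) (o : vec E) :
  (forall v, 0 <= f v) ->
  DR_submodular f ->
  (0 < k)%N ->
  0 < alpha -> alpha < 1 ->
  uniq s -> (forall e, e \in s) ->
  optimal f k o ->
  let xy := main_loop f k alpha s in
  let o1 := small_part k alpha o in
  f (joinv o1 xy.1) + f (joinv o1 xy.2) <= 4%:R * (f xy.1 + f xy.2).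
Proof.
move=> hf hDR hk ha0 ha1 hu hall [[hn1 _] _] /=.
set xy := main_loop f k alpha s; set o1 := small_part k alpha o.
have hw : forall a, (o1 a)%:R <= alpha * k%:R.
  move=> a; rewrite /o1 /small_part ffunE; case: ifP => // _.
  by apply: mulr_ge0; [apply: ltW | apply: ler0n].
have [_ HP] := main_inv hf hDR hk ha1 hw hu.
rewrite -/xy in HP.
have hsum : (\sum_(a <- s) o1 a <= k)%N.
  rewrite big_uniq //; apply: leq_trans hn1; rewrite /norm1.
  rewrite (eq_bigl (fun a => true)); last by move=> a; rewrite hall.
  apply: leq_sum => a _; rewrite /o1 /small_part ffunE; case: ifP => //.
have hF : 0 <= f xy.1 + f xy.2 by apply: addr_ge0.
have hSA : (\sum_(a <- s) o1 a)%:R * ((f xy.1 + f xy.2) / k%:R)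
           <= f xy.1 + f xy.2.
  apply: le_trans (_ : k%:R * ((f xy.1 + f xy.2) / k%:R) <= _).
    apply: ler_wpM2r; last by rewrite ler_nat.
    by apply: divr_ge0 => //; apply: ler0n.
  by rewrite mulrC divfK // pnatr_eq0 -lt0n.
have hJ : forall z : vec E, joinv o1 z
    = [ffun b => if b \in s then maxn (o1 b) (z b) else z b].
  by move=> z; apply/ffunP => b; rewrite !ffunE hall.
have L1 := lattice hDR o1 xy.1 hu.
have L2 := lattice hDR o1 xy.2 hu.
rewrite -hJ in L1; rewrite -hJ in L2.
move: HP; rewrite /Phi big_split /= => HP.
move: L1 L2 HP hSA hF; lra.
Qed.
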